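(* For any metrized graph $\Gamma$ with $v$ vertices and any vertex $p\in V(\Gamma)$, $$4Kf(\Gamma)=v \cdot \sum_{e_i \in E(\Gamma)}\frac{L_i(R_{a_i,p}-R_{b_i,p})^2}{(L_i+R_i)^2} + \sum_{e_i \in E(\Gamma)}\frac{R_i}{L_i + R_i} \sum_{w \in V(\Gamma)}\big(r(p_i,w)+r(q_i,w)\big),$$ where $p_i,q_i$ denote the end points of $e_i$.
   Context: A metrized graph $\Gamma$ is a finite connected graph (multiple edges and self-loops allowed) each of whose edges is identified with a closed segment of positive length, with a finite nonempty vertex set $V(\Gamma)$ containing every point of valence $\neq2$; $v=\#V(\Gamma)$, $L_i$ the length of $e_i$, $r$ the effective resistance (edges as resistors of resistance equal to length). $Kf(\Gamma)=\frac12\sum_{p,q\in V(\Gamma)}r(p,q)$. For an edge $e_i$: if $\Gamma-e_i$ (interior deleted) is connected, $R_i$ is the effective resistance between $p_i,q_i$ in $\Gamma-e_i$, $R_{a_i,p}=\hat j_{p_i}(p,q_i)$, $R_{b_i,p}=\hat j_{q_i}(p,p_i)$ with $\hat j_z(x,y)$ the voltage function of $\Gamma-e_i$ (potential at $x$ when unit current enters at $y$ and exits at $z$, potential $0$ at $z$); if $e_i$ is a bridge, $R_{a_i,p}=0,R_{b_i,p}=R_i$ for $p$ in the component of $\Gamma-e_i$ containing $p_i$ and $R_{a_i,p}=R_i,R_{b_i,p}=0$ otherwise, with every expression in $R_i$ interpreted as its limit as $R_i\to\infty$; for a self-loop $R_i=0$. *)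

(* Defs.v *)
From HB Require Import structures.
From mathcomp Require Import all_boot all_order all_algebra.
From mathcomp Require Import all_classical all_reals all_analysis.
From Stdlib Require Import ClassicalEpsilon.
Set Implicit Arguments. Unset Strict Implicit. Unset Printing Implicit Defensive.
Import Order.TTheory GRing.Theory Num.Theory numFieldNormedType.Exports.
Local Open Scope ring_scope.

(* A metrized graph given by a combinatorial model: vertex set V = 'I_n,
   edges e_i (i : 'I_m) with end points p_i = eP G i, q_i = eQ G i
   (multiple edges and self-loops allowed) and lengths L_i = len G i. *)
Record mgraph (R : realType) (n m : nat) := MGraph {
  eP : 'I_m -> 'I_n ;
  eQ : 'I_m -> 'I_n ;
  len : 'I_m -> R }.

Section Defs.
Variables (R : realType) (n m : nat) (G : mgraph R n m).

Definition adj (keep : pred 'I_m) : rel 'I_n :=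
  fun x y => [exists j, keep j &&
     (((eP G j == x) && (eQ G j == y)) || ((eP G j == y) && (eQ G j == x)))].

Definition connectedb (keep : pred 'I_m) : Prop :=
  forall x y : 'I_n, connect (adj keep) x y.

Definition allE : pred 'I_m := predT.
Definition delE (i : 'I_m) : pred 'I_m := fun j => j != i.

(* net current leaving vertex x for potential u, in the subnetwork keep
   (edge e_j is a resistor of resistance len j) *)
Definition outcurrent (keep : pred 'I_m) (u : 'I_n -> R) (x : 'I_n) : R :=
  \sum_(j < m | keep j)
     (((eP G j == x)%:R * (u (eP G j) - u (eQ G j))
      + (eQ G j == x)%:R * (u (eQ G j) - u (eP G j))) / len G j).

Definition is_voltage (keep : pred 'I_m) (z y : 'I_n) (u : 'I_n -> R) : Prop :=
  u z = 0 /\ forall x, outcurrent keep u x = (x == y)%:R - (x == z)%:R.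

Definition jhat (keep : pred 'I_m) (z x y : 'I_n) : R :=
  epsilon (inhabits (fun _ : 'I_n => 0 : R)) (is_voltage keep z y) x.

Definition resist (keep : pred 'I_m) (x y : 'I_n) : R := jhat keep y x x.

Definition r (x y : 'I_n) : R := resist allE x y.

Definition Kf : R := 2^-1 * \sum_(x < n) \sum_(y < n) r x y.

(* R_i, R_{a_i,p}, R_{b_i,p} when Gamma - e_i is connected *)
Definition Ri (i : 'I_m) : R := resist (delE i) (eP G i) (eQ G i).
Definition Ra (i : 'I_m) (p : 'I_n) : R := jhat (delE i) (eP G i) p (eQ G i).
Definition Rb (i : 'I_m) (p : 'I_n) : R := jhat (delE i) (eQ G i) p (eP G i).

(* bridge case: R_i = t, with R_a, R_b depending on the component of p *)
Definition Ra_br (i : 'I_m) (p : 'I_n) (t : R) : R :=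
  if connect (adj (delE i)) (eP G i) p then 0 else t.
Definition Rb_br (i : 'I_m) (p : 'I_n) (t : R) : R :=
  if connect (adj (delE i)) (eP G i) p then t else 0.

(* L_i (R_{a_i,p} - R_{b_i,p})^2 / (L_i + R_i)^2, with limit R_i -> oo for bridges *)
Definition term1 (i : 'I_m) (p : 'I_n) : R :=
  if `[< connectedb (delE i) >] then
    len G i * (Ra i p - Rb i p) ^+ 2 / (len G i + Ri i) ^+ 2
  else
    lim ((fun t : R => len G i * (Ra_br i p t - Rb_br i p t) ^+ 2
                       / (len G i + t) ^+ 2) @ +oo)%classic.

(* R_i / (L_i + R_i), with limit R_i -> oo for bridges *)
Definition coef (i : 'I_m) : R :=
  if `[< connectedb (delE i) >] then Ri i / (len G i + Ri i)
  else lim ((fun t : R => t / (len G i + t)) @ +oo)%classic.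

End Defs.

(* Main.v *)
Require Import Defs.
From HB Require Import structures.
From mathcomp Require Import all_boot all_order all_algebra.
From mathcomp Require Import all_classical all_reals all_analysis.
From mathcomp Require Import ring lra zify.
From Stdlib Require Import ClassicalEpsilon.
Import Order.TTheory GRing.Theory Num.Theory numFieldNormedType.Exports.
Local Open Scope ring_scope.

Lemma cvg_frac (R : realType) (L : R) : 0 < L ->
  ((fun t : R => t / (L + t)) @ +oo --> (1:R))%classic.
Proof.
move=> L0; apply/cvgrPdist_lt => e e0.
have := nbhs_pinfty_gt (r := L / e) (num_real _).
apply: filterS => t Ht.
have t0 : 0 < t by apply: lt_trans Ht; exact: divr_gt0.
have Lt0 : 0 < L + t by exact: addr_gt0.
have -> : 1 - t / (L + t) = L / (L + t).
  by apply: (mulIf (lt0r_neq0 Lt0)); rewrite mulrBl !mulfVK ?lt0r_neq0 // mul1r addrK.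
rewrite ger0_norm; last by rewrite divr_ge0 // ltW.
rewrite ltr_pdivrMr // -ltr_pdivrMl // ; rewrite mulrC.
by apply: lt_le_trans Ht _; rewrite lerDr ltW.
Qed.

Lemma lim_frac (R : realType) (L : R) : 0 < L ->
  lim ((fun t : R => t / (L + t)) @ +oo)%classic = 1.
Proof. by move=> L0; apply: cvg_lim => //; exact: (@cvg_frac R L L0). Qed.

Lemma lim_frac2 (R : realType) (L : R) : 0 < L ->
  lim ((fun t : R => L * (t / (L + t)) ^+ 2) @ +oo)%classic = L.
Proof.
move=> L0; apply: cvg_lim => //.
have h := @cvg_frac R L L0.
have := cvgM (cvg_cst L) (cvgM h h).
rewrite mulr1 mulr1.
have -> : (fun t : R => L * (t / (L + t)) ^+ 2) = (fun t => L * (t / (L + t) * (t / (L + t)))).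
  by apply/funext => t; rewrite expr2.
apply.
Qed.

Section Elec.
Variables (R : realType) (n m : nat) (G : mgraph R n m).
Hypothesis hlen : forall i : 'I_m, 0 < len G i.

Lemma lenN0 j : len G j != 0.
Proof. by rewrite lt0r_neq0. Qed.

Lemma oc_alt keep u x : outcurrent G keep u x =
  \sum_(j < m | keep j) (((eP G j == x)%:R - (eQ G j == x)%:R)
      * (u (eP G j) - u (eQ G j))) / len G j.
Proof. by apply: eq_bigr => j _; congr (_ / _); ring. Qed.

Lemma sum_ind (F : 'I_n -> R) y : \sum_x (y == x)%:R * F x = F y.
Proof.
rewrite (bigD1 y) //= eqxx mul1r big1 ?addr0 // => x hx.
by rewrite eq_sym (negbTE hx) mul0r.
Qed.

Lemma sum_ind' (F : 'I_n -> R) y : \sum_x (x == y)%:R * F x = F y.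
Proof. by rewrite -(sum_ind F y); apply: eq_bigr => x _; rewrite eq_sym. Qed.

Lemma exch keep (U : 'I_n -> 'I_n -> R) (h : 'I_n -> R) :
  \sum_x outcurrent G keep (U x) x * h x =
  \sum_(j < m | keep j) ((U (eP G j) (eP G j) - U (eP G j) (eQ G j)) * h (eP G j)
      - (U (eQ G j) (eP G j) - U (eQ G j) (eQ G j)) * h (eQ G j)) / len G j.
Proof.
under eq_bigr do rewrite oc_alt mulr_suml.
rewrite exchange_big /=; apply: eq_bigr => j _.
transitivity (\sum_x ((eP G j == x)%:R * ((U x (eP G j) - U x (eQ G j)) * h x / len G j)
   - (eQ G j == x)%:R * ((U x (eP G j) - U x (eQ G j)) * h x / len G j))).
  by apply: eq_bigr => x _; ring.
rewrite sumrB !sum_ind; ring.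
Qed.

Lemma green keep u v : \sum_x outcurrent G keep u x * v x =
  \sum_(j < m | keep j) ((u (eP G j) - u (eQ G j)) * (v (eP G j) - v (eQ G j))) / len G j.
Proof.
rewrite (exch keep (fun _ => u) v); apply: eq_bigr => j _; congr (_ / _); ring.
Qed.

Lemma oc_total keep u : \sum_x outcurrent G keep u x = 0.
Proof.
have := green keep u (fun _ => 1).
under eq_bigr do rewrite mulr1.
move=> ->; apply: big1 => j _; by rewrite subrr mulr0 mul0r.
Qed.

Lemma oc_lin keep u v (al be : R) x :
  outcurrent G keep (fun z => al * u z + be * v z) x =
  al * outcurrent G keep u x + be * outcurrent G keep v x.
Proof.
rewrite !oc_alt !mulr_sumr -big_split /=; apply: eq_bigr => j _; ring.
Qed.

Lemma oc_shift keep u c x :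
  outcurrent G keep (fun z => u z + c) x = outcurrent G keep u x.
Proof. rewrite !oc_alt; apply: eq_bigr => j _; congr (_ / _); ring. Qed.

Lemma adj_sym keep : symmetric (adj G keep).
Proof.
have H x y : adj G keep x y -> adj G keep y x.
  by move=> /existsP [j /andP [kj h]]; apply/existsP; exists j; rewrite kj /= orbC.
by move=> x y; apply/idP/idP; apply: H.
Qed.

Lemma harm_const keep (hc : connectedb G keep) u :
  (forall x, outcurrent G keep u x = 0) -> forall x y, u x = u y.
Proof.
move=> H.
have E : \sum_(j < m | keep j) ((u (eP G j) - u (eQ G j)) * (u (eP G j) - u (eQ G j))) / len G j = 0.
  by rewrite -green big1 // => x _; rewrite H mul0r.
have He j : keep j -> u (eP G j) = u (eQ G j).
  move=> kj.
  have nn : forall j, keep j -> 0 <= ((u (eP G j) - u (eQ G j)) * (u (eP G j) - u (eQ G j))) / len G j.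
    by move=> j0 _; apply: divr_ge0; [rewrite -expr2 sqr_ge0 | exact: ltW].
  have := psumr_eq0P nn E kj.
  move=> /eqP; rewrite mulf_eq0 invr_eq0 (negbTE (lenN0 j)) orbF.
  by rewrite mulf_eq0 orbb subr_eq0 => /eqP.
have Hadj x y : adj G keep x y -> u x = u y.
  move=> /existsP [j /andP [kj /orP [/andP [/eqP <- /eqP <-] | /andP [/eqP <- /eqP <-]]]].
    exact: He.
  by symmetry; apply: He.
move=> x y; have /connectP [s pth ->] := hc x y.
elim: s x pth => [|z s IH] x //= /andP [hxz pth].
by rewrite (Hadj _ _ hxz); apply: IH.
Qed.

Lemma exist_sol keep (hc : connectedb G keep) (x0 : 'I_n) (bb : 'I_n -> R)
  (hb : \sum_x bb x = 0) : exists u, forall x, outcurrent G keep u x = bb x.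
Proof.
pose A : 'M[R]_n := \matrix_(y, x) outcurrent G keep (fun z => (z == y)%:R) x.
have lin : forall (v : 'rV[R]_n) x, (v *m A) 0 x = outcurrent G keep (fun z => v 0 z) x.
  move=> v x; rewrite !mxE oc_alt.
  under eq_bigr do rewrite mxE oc_alt mulr_sumr.
  rewrite exchange_big /=; apply: eq_bigr => j _.
  transitivity (\sum_y ((eP G j == y)%:R * (v 0 y * (((eP G j == x)%:R - (eQ G j == x)%:R) / len G j))
     - (eQ G j == y)%:R * (v 0 y * (((eP G j == x)%:R - (eQ G j == x)%:R) / len G j)))).
    by apply: eq_bigr => y _; ring.
  rewrite sumrB !sum_ind; ring.
have ker : (kermx A <= (const_mx 1 : 'rV[R]_n))%MS.
  apply/row_subP => i.
  have : row i (kermx A) *m A = 0 by rewrite -row_mul mulmx_ker row0.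
  move: (row i (kermx A)) => v hv.
  have hc' := @harm_const keep hc (fun z => v 0 z).
  have -> : v = v 0 x0 *: const_mx 1.
    apply/rowP => z; rewrite !mxE mulr1; apply: hc' => x.
    by rewrite -lin hv mxE.
  by rewrite scalemx_sub.
have rA : (n - \rank A <= 1)%N.
  by rewrite -mxrank_ker; apply: leq_trans (mxrankS ker) (rank_leq_row _).
pose K := kermx (const_mx 1 : 'M[R]_(n,1)).
have rK : \rank K = (n - 1)%N.
  rewrite mxrank_ker; congr (_ - _)%N; apply/eqP.
  rewrite eqn_leq rank_leq_col lt0n mxrank_eq0; apply/eqP => /matrixP/(_ x0 0).
  by rewrite !mxE => /eqP; rewrite oner_eq0.
have AK : (A <= K)%MS.
  apply/sub_kermxP; apply/matrixP => y k; rewrite !mxE.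
  under eq_bigr do rewrite !mxE mulr1.
  exact: oc_total.
have KA : (K <= A)%MS.
  case: (mxrank_leqif_sup AK) => le eqC; rewrite -eqC eqn_leq le /= rK.
  have := rank_leq_row A; lia.
have bK : (\row_x bb x <= K)%MS.
  apply/sub_kermxP; apply/matrixP => i k; rewrite !mxE.
  under eq_bigr do rewrite !mxE mulr1.
  exact: hb.
have /submxP [D hD] := submx_trans bK KA.
exists (fun z => D 0 z) => x.
by rewrite -lin -hD mxE.
Qed.

Lemma volt_ex keep (hc : connectedb G keep) (x0 : 'I_n) z y :
  is_voltage G keep z y (fun x => jhat G keep z x y).
Proof.
rewrite /jhat; apply: (epsilon_spec (inhabits (fun _ : 'I_n => 0 : R)) (is_voltage G keep z y)).
have [u0 hu0] : exists u, forall x, outcurrent G keep u x = (x == y)%:R - (x == z)%:R.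
  apply: (@exist_sol keep hc x0).
  rewrite sumrB; have s1 (w : 'I_n) : \sum_(x < n) ((x == w)%:R : R) = 1.
    transitivity (\sum_(x < n) (x == w)%:R * (1:R)); last exact: sum_ind'.
    by apply: eq_bigr => x _; rewrite mulr1.
  by rewrite !s1 subrr.
exists (fun x => u0 x + - u0 z); split; first by rewrite subrr.
by move=> x; rewrite oc_shift hu0.
Qed.

Lemma oc_split i (keep : pred 'I_m) u x : keep i ->
  outcurrent G keep u x = outcurrent G (fun j => keep j && (j != i)) u x +
   (((eP G i == x)%:R - (eQ G i == x)%:R) * (u (eP G i) - u (eQ G i))) / len G i.
Proof.
move=> ki; rewrite !oc_alt (bigD1 i) //= addrC; congr (_ + _).
Qed.

Lemma oc_del i u x : outcurrent G (@allE m) u x = outcurrent G (delE i) u x +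
   (((eP G i == x)%:R - (eQ G i == x)%:R) * (u (eP G i) - u (eQ G i))) / len G i.
Proof. by rewrite (@oc_split i). Qed.

Hypothesis hconn : connectedb G (@allE m).

Lemma conn_del i : connect (adj G (delE i)) (eP G i) (eQ G i) -> connectedb G (delE i).
Proof.
move=> hab x y; apply: (connect_sub _ (hconn x y)) => u v.
move=> /existsP [j /andP [_ hj]]; case: (eqVneq j i) => [eji|hji].
  subst j; case/orP: hj => /andP [/eqP <- /eqP <-] //.
  by rewrite (sym_connect_sym (@adj_sym _)).
by apply: connect1; apply/existsP; exists j; rewrite /delE hji.
Qed.

Lemma edge_formula i (phi : 'I_n -> R)
  (hphi : forall x, outcurrent G (@allE m) phi x = (x == eP G i)%:R - (x == eQ G i)%:R) p :
  term1 G i p = (2 * phi p - phi (eP G i) - phi (eQ G i)) ^+ 2 / len G i /\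
  coef G i = (phi (eP G i) - phi (eQ G i)) / len G i.
Proof.
rewrite /term1 /coef; case: (asboolP (connectedb G (delE i))) => hc.
- set a := eP G i; set b := eQ G i.
  have hu := @volt_ex _ hc p a b; set u := (fun x => _) in hu.
  have hw := @volt_ex _ hc p b a; set w := (fun x => _) in hw.
  have -> : Ri G i = w a by [].
  have -> : Ra G i p = u p by [].
  have -> : Rb G i p = w p by [].
  have uw x : u x + w x = w a.
    have H : forall z, outcurrent G (delE i) (fun z => 1 * u z + 1 * w z) z = 0.
      by move=> z; rewrite oc_lin hu.2 hw.2; ring.
    have := @harm_const (delE i) hc _ H x a.
    by rewrite !mul1r hu.1 add0r.
  have ub : u b = w a by rewrite -(uw b) hw.1 addr0.
  set Ri := w a.
  set k := 1 + Ri / len G i.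
  have hk x : u x = k * (phi a - phi x).
    have H : forall z, outcurrent G (@allE m) (fun z => 1 * u z + k * phi z) z = 0.
      move=> z; rewrite oc_lin (oc_del i) hu.2 hphi hu.1 ub /k -/a -/b.
      rewrite [eP G i == z]eq_sym [eQ G i == z]eq_sym.
      rewrite -/a -/b -/Ri; field; exact: lenN0.
    have := @harm_const _ hconn _ H x a.
    rewrite hu.1 !mul1r add0r => h; apply: (addIr (k * phi x)); rewrite h; ring.
  have Ri0 : 0 <= Ri.
    have := green (delE i) u u.
    rewrite /Ri -ub.
    under eq_bigr do rewrite hu.2 mulrBl.
    rewrite sumrB !sum_ind' hu.1 subr0 => ->.
    apply: sumr_ge0 => j _; apply: divr_ge0; [by rewrite -expr2 sqr_ge0 | exact: ltW].
  have LRi : len G i + Ri != 0 by rewrite lt0r_neq0 // ltr_wpDr.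
  have kLR : len G i + Ri = len G i * k by rewrite /k; field; exact: lenN0.
  have k0 : k != 0.
    by apply: contraNneq LRi => hk0; rewrite kLR hk0 mulr0.
  have RiY : Ri = k * (phi a - phi b) by rewrite /Ri -ub hk.
  split.
    have -> : u p - w p = k * (phi a - 2 * phi p + phi b).
      by have := uw p; move=> h; rewrite (_ : w p = Ri - u p); [rewrite hk RiY; ring | rewrite /Ri -h; ring].
    rewrite kLR; field; rewrite k0 lenN0 //.
  rewrite kLR RiY; field; rewrite k0 lenN0 //.
- set a := eP G i; set b := eQ G i; set L := len G i.
  have L0 : 0 < L := hlen i.
  have nab : ~~ connect (adj G (delE i)) a b by apply/negP => /conn_del.
  pose phi' z := if connect (adj G (delE i)) a z then L else 0.
  have ocp x : outcurrent G (@allE m) phi' x = (x == a)%:R - (x == b)%:R.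
    rewrite (oc_del i) /phi' connect0 (negbTE nab) -/a -/b -/L.
    rewrite oc_alt big1; last first.
      move=> j hj; suff -> : connect (adj G (delE i)) a (eP G j) = connect (adj G (delE i)) a (eQ G j).
        by rewrite subrr mulr0 mul0r.
      have ej : adj G (delE i) (eP G j) (eQ G j).
        by apply/existsP; exists j; rewrite hj !eqxx.
      apply/idP/idP => h; apply: connect_trans h _; apply: connect1 => //.
      by rewrite adj_sym.
    rewrite add0r [a == x]eq_sym [b == x]eq_sym; field; exact: lt0r_neq0.
  have hd : forall z, phi z - phi' z = phi a - phi' a.
    have H : forall z, outcurrent G (@allE m) (fun z => 1 * phi z + (-1) * phi' z) z = 0.
      by move=> z; rewrite oc_lin hphi ocp; ring.
    move=> z; have := @harm_const _ hconn _ H z a; rewrite !mul1r !mulN1r.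
    by [].
  have ea : phi' a = L by rewrite /phi' connect0.
  have eb : phi' b = 0 by rewrite /phi' (negbTE nab).
  have ed : phi a - phi b = L.
    have := hd b; rewrite ea eb subr0 => h.
    by rewrite h; ring.
  split; last by rewrite lim_frac // ed divff // lt0r_neq0.
  have -> : (fun t => len G i * (Ra_br G i p t - Rb_br G i p t) ^+ 2 / (len G i + t) ^+ 2)
      = (fun t => L * (t / (L + t)) ^+ 2).
    apply/funext => t; rewrite /Ra_br /Rb_br -/a -/L expr_div_n mulrA.
    by case: ifP => _; ring.
  rewrite lim_frac2 //.
  have e2 : 2 * phi p - phi a - phi b = 2 * phi' p - L.
    have := hd p; rewrite ea => h.
    have -> : phi p = phi' p + (phi a - L) by rewrite -h; ring.
    have -> : phi b = phi a - L by rewrite -ed; ring.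
    ring.
  rewrite e2 /phi'; case: ifP => _; field; exact: lt0r_neq0.
Qed.

Lemma sum_delta (w : 'I_n) : \sum_(x < n) ((x == w)%:R : R) = 1.
Proof.
transitivity (\sum_(x < n) (x == w)%:R * (1:R)); last exact: sum_ind'.
by apply: eq_bigr => x _; rewrite mulr1.
Qed.

Lemma sum_dot (z : 'I_n) c (f : 'I_n -> R) :
  \sum_x ((x == z)%:R - c) * f x = f z - c * \sum_x f x.
Proof. by rewrite (eq_bigr (fun x => (x == z)%:R * f x - c * f x)) ?sumrB ?sum_ind' -?mulr_sumr // => x _; ring. Qed.

Lemma sum_cst (c : R) : \sum_(x < n) c = n%:R * c.
Proof. by rewrite sumr_const card_ord mulr_natl. Qed.

Theorem main_sec (p : 'I_n) :
  4 * Kf G =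
    n%:R * (\sum_(i < m) term1 G i p)
  + \sum_(i < m) (coef G i *
        \sum_(w < n) (r G (eP G i) w + r G (eQ G i) w)).
Proof.
have n0 : n%:R != 0 :> R by rewrite pnatr_eq0 -lt0n; apply: leq_ltn_trans (ltn_ord p).
pose P y (f : 'I_n -> R) := (forall x, outcurrent G (@allE m) f x = (x == y)%:R - n%:R^-1)
   /\ \sum_x f x = 0.
have Mex y : exists f, P y f.
  have [u0 hu0] : exists u, forall x, outcurrent G (@allE m) u x = (x == y)%:R - n%:R^-1.
    apply: (@exist_sol _ hconn p).
    by rewrite sumrB sum_delta sum_cst mulfV // subrr.
  exists (fun z => u0 z + - ((\sum_x u0 x) / n%:R)); split.
    by move=> x; rewrite oc_shift.
  by rewrite big_split /= sum_cst; field.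
pose M y := epsilon (inhabits (fun _ : 'I_n => 0 : R)) (P y).
have hM y : P y (M y) := epsilon_spec _ _ (Mex y).
have ocM y x : outcurrent G (@allE m) (M y) x = (x == y)%:R - n%:R^-1 := (hM y).1 x.
have sM y : \sum_x M y x = 0 := (hM y).2.
have gr u v : \sum_x outcurrent G (@allE m) u x * v x =
   \sum_(j < m) ((u (eP G j) - u (eQ G j)) * (v (eP G j) - v (eQ G j))) / len G j
  := green (@allE m) u v.
have ex (h : 'I_n -> R) : \sum_x outcurrent G (@allE m) (M x) x * h x =
  \sum_(j < m) ((M (eP G j) (eP G j) - M (eP G j) (eQ G j)) * h (eP G j)
      - (M (eQ G j) (eP G j) - M (eQ G j) (eQ G j)) * h (eQ G j)) / len G j
  := exch (@allE m) M h.
have symM y z : M y z = M z y.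
  transitivity (\sum_x outcurrent G (@allE m) (M z) x * M y x).
    by under eq_bigr do rewrite ocM; rewrite sum_dot sM mulr0 subr0.
  transitivity (\sum_x outcurrent G (@allE m) (M y) x * M z x); last first.
    by under eq_bigr do rewrite ocM; rewrite sum_dot sM mulr0 subr0.
  by rewrite !gr; apply: eq_bigr => j _; ring.
have rM x y : r G x y = M x x + M y y - 2 * M x y.
  have hv := @volt_ex _ hconn p y x.
  have hv1 : jhat G (@allE m) y y x = 0 := hv.1.
  have hv2 : forall z, outcurrent G (@allE m) (fun z => jhat G (@allE m) y z x) z
     = (z == x)%:R - (z == y)%:R := hv.2.
  change (r G x y) with (jhat G (@allE m) y x x).
  pose d z := 1 * M x z + (-1) * M y z.
  have H : forall z, outcurrent G (@allE m)
      (fun z => 1 * jhat G (@allE m) y z x + (-1) * d z) z = 0.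
    by move=> z; rewrite oc_lin oc_lin hv2 !ocM; ring.
  have := @harm_const _ hconn _ H x y.
  rewrite hv1 /d (symM y x) => h.
  lra.
pose D z := M z z.
pose T := \sum_z D z.
have Sx x : \sum_(w < n) r G x w = n%:R * M x x + T.
  under eq_bigr do rewrite rM.
  rewrite sumrB big_split /= sum_cst -mulr_sumr sM mulr0 subr0.
  by [].
have hLHS : 4 * Kf G = 4 * n%:R * T.
  rewrite /Kf; under eq_bigr do rewrite Sx.
  rewrite big_split /= -mulr_sumr sum_cst -/T; field.
  by [].
rewrite hLHS.
have hph i x : outcurrent G (@allE m)
    (fun z => 1 * M (eP G i) z + (-1) * M (eQ G i) z) x
    = (x == eP G i)%:R - (x == eQ G i)%:R.
  by rewrite oc_lin !ocM; ring.
have t1 i : term1 G i p = ((2 * M p (eP G i) - D (eP G i)) - (2 * M p (eQ G i) - D (eQ G i))) ^+ 2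
   / len G i.
  have [e1 _] := @edge_formula i _ (hph i) p.
  by rewrite e1 /D (symM (eP G i) p) (symM (eQ G i) p) (symM (eQ G i) (eP G i)); congr (_ / _); ring.
have c1 i : coef G i = (D (eP G i) + D (eQ G i) - 2 * M (eP G i) (eQ G i)) / len G i.
  have [_ e2] := @edge_formula i _ (hph i) p.
  by rewrite e2 /D (symM (eQ G i) (eP G i)); congr (_ / _); ring.
have g1 (h : 'I_n -> R) : \sum_x outcurrent G (@allE m) (M p) x * h x = h p - n%:R^-1 * \sum_x h x.
  by under eq_bigr do rewrite ocM; rewrite sum_dot.
have S1 : \sum_(i < m) term1 G i p =
   4 * (\sum_x outcurrent G (@allE m) (M p) x * M p x)
   - 4 * (\sum_x outcurrent G (@allE m) (M p) x * D x)
   + \sum_x outcurrent G (@allE m) D x * D x.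
  rewrite !gr !mulr_sumr -sumrB -big_split /=.
  by apply: eq_bigr => j _; rewrite t1; ring.
have S2 : \sum_(i < m) (coef G i * \sum_(w < n) (r G (eP G i) w + r G (eQ G i) w)) =
   n%:R * (2 * (\sum_x outcurrent G (@allE m) (M x) x * D x)
           - \sum_x outcurrent G (@allE m) D x * D x)
   + 2 * T * \sum_x outcurrent G (@allE m) (M x) x * 1.
  rewrite ex ex gr !mulr_sumr -sumrB !mulr_sumr -big_split /=.
  apply: eq_bigr => j _; rewrite big_split /= !Sx c1 /D (symM (eQ G j) (eP G j)).
  rewrite -mulr_sumr -[\sum_(i < n) M i i]/T; ring.
have X1e : \sum_x outcurrent G (@allE m) (M x) x * 1 = n%:R * (1 - n%:R^-1).
  by under eq_bigr do rewrite ocM eqxx mulr1; rewrite sum_cst.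
have X2e : \sum_x outcurrent G (@allE m) (M x) x * D x = (1 - n%:R^-1) * T.
  by under eq_bigr do rewrite ocM eqxx; rewrite -mulr_sumr.
rewrite S1 S2 X1e X2e !g1 sM /D.
rewrite -/(D p) -/T.
field.
exact: n0.
Qed.

End Elec.

Theorem lemma3p4 (R : realType) (n m : nat) (G : mgraph R n m)
  (hlen : forall i : 'I_m, 0 < len G i)
  (hconn : connectedb G (@allE m))
  (p : 'I_n) :
  4 * Kf G =
    n%:R * (\sum_(i < m) term1 G i p)
  + \sum_(i < m) (coef G i *
        \sum_(w < n) (r G (eP G i) w + r G (eQ G i) w)).
Proof. exact: (@main_sec R n m G hlen hconn p). Qed.
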